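(* Let $n$ be a power of two. An element $\sum_{0\le i\le n/2-1}a_i\mathfrak{r}^i+\sum_{0\le i\le n/2-1}b_i\mathfrak{s}\mathfrak{r}^i\in\mathbf{R}$ is invertible in $\mathbf{R}\otimes\mathbb{Q}$ if and only if for every odd $k$ with $1\le k\le n/2$, \[\Big|\sum_{0\le i\le n/2-1}a_ie^{2\pi\sqrt{-1}ki/n}\Big|-\Big|\sum_{0\le i\le n/2-1}b_ie^{2\pi\sqrt{-1}ki/n}\Big|\neq0,\] where $|\cdot|$ is the complex absolute value.
   Context: $D_{2n}$ is the dihedral group of order $2n$ generated by $\mathfrak{r},\mathfrak{s}$ with $\mathfrak{r}^n=\mathfrak{s}^2=1$, $\mathfrak{s}\mathfrak{r}\mathfrak{s}=\mathfrak{r}^{-1}$, and $\mathbf{R}=\mathbb{Z}[D_{2n}]/((\mathfrak{r}^{n/2}+1)\mathbb{Z}[D_{2n}])$ (quotient by a two-sided ideal), a free $\mathbb{Z}$-module with basis $\mathfrak{r}^i,\mathfrak{s}\mathfrak{r}^i$, $0\le i\le n/2-1$; the coefficients $a_i,b_i$ are integers. *)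

(* Defs.v *)
From mathcomp Require Import all_boot all_order all_algebra.
From mathcomp Require Import algC.
Set Implicit Arguments. Unset Strict Implicit. Unset Printing Implicit Defensive.
Import Order.TTheory GRing.Theory Num.Theory.
Local Open Scope ring_scope.

(* The Q-algebra  R (x) Q = Q[D_{2n}] / (r^m + 1),  m = n/2, n = 2m.
   An element is given by its coordinates on the basis  s^e r^i
   (e : bool, 0 <= i < m):  x = \sum x(e,i) s^e r^i. *)
Definition RQ (m : nat) := {ffun bool * 'I_m -> rat}.

(* Coefficient of the basis vector s^g r^l in the product
   (s^e r^i)(s^f r^j) computed in D_{2n} and reduced with r^n = 1, s^2 = 1,
   s r s = r^-1 and r^m = -1.  In D_{2n}:
   s^e r^i s^f r^j = s^(e+f) r^(k) with k = (if f then -i else i) + j. *)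
Definition dcoef (m : nat) (e : bool) (i : nat) (f : bool) (j : nat)
    (g : bool) (l : nat) : rat :=
  let k : int := (if f then - (i%:Z) else i%:Z) + j%:Z in
  let q : nat := absz (k %% (2 * m)%:Z)%Z in
  if (addb e f) == g then
    (if q == l then 1 else if q == (l + m)%N then -1 else 0)
  else 0.

Definition mulRQ (m : nat) (x y : RQ m) : RQ m :=
  [ffun gl : bool * 'I_m =>
     \sum_(ei : bool * 'I_m) \sum_(fj : bool * 'I_m)
        x ei * y fj * dcoef m ei.1 (val ei.2) fj.1 (val fj.2) gl.1 (val gl.2)].

Definition oneRQ (m : nat) : RQ m :=
  [ffun gl : bool * 'I_m => if (gl.1 == false) && (val gl.2 == 0%N) then 1 else 0].

Definition invertibleRQ (m : nat) (x : RQ m) : Prop :=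
  exists y : RQ m, mulRQ x y = oneRQ m /\ mulRQ y x = oneRQ m.

Definition eltRQ (m : nat) (a b : 'I_m -> int) : RQ m :=
  [ffun gl : bool * 'I_m => ((if gl.1 then b gl.2 else a gl.2)%:~R : rat)].

(* e^{2 pi sqrt(-1)/n} with n = 2m : the root of -1 of minimal argument *)
Definition zeta (m : nat) : algC := m.-root (-1).

Definition evalC (m : nat) (c : 'I_m -> int) (k : nat) : algC :=
  \sum_(i < m) (c i)%:~R * zeta m ^+ (k * i).

(* Main.v *)
From HB Require Import structures.
From mathcomp Require Import all_boot all_order all_algebra all_field.
From mathcomp Require Import zify ring.
Require Import Defs.
Import Order.TTheory GRing.Theory Num.Theory.
Local Open Scope ring_scope.

Definition Dm (u : algC) : 'M[algC]_2 :=
  \matrix_(i, j) if i == j then (if i == 0 then u else u^-1) else 0.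
Definition Sm : 'M[algC]_2 := \matrix_(i, j) if i == j then 0 else 1.

Lemma ord2P (i : 'I_2) : i = 0 \/ i = 1.
Proof. case: i => [[|[|]]] // H; [left|right]; exact: val_inj. Qed.

Ltac m2 := apply/matrixP; intros i j; case: (ord2P i) => ->; case: (ord2P j) => ->;
  rewrite !mxE ?big_ord_recl ?big_ord0 /= ?mxE /= ?mul0r ?mulr0 ?addr0 ?add0r ?mul1r ?mulr1.

Lemma DmM u v : Dm u *m Dm v = Dm (u * v).
Proof. by m2; rewrite // invfM. Qed.
Lemma Dm1 : Dm 1 = 1%:M.
Proof. by m2; rewrite ?invr1. Qed.
Lemma DmN u : Dm (- u) = - Dm u.
Proof. by m2; rewrite ?invrN ?oppr0. Qed.
Lemma SmSm : Sm *m Sm = 1%:M.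
Proof. by m2. Qed.
Lemma DmS u : Dm u *m Sm = Sm *m Dm u^-1.
Proof. by m2; rewrite ?invrK. Qed.

Definition Bm (w : algC) (e : bool) (i : nat) :=
  if e then Sm *m Dm (w ^+ i) else Dm (w ^+ i).

Lemma BmM (w : algC) (e : bool) (i : nat) (f : bool) (j : nat) : w != 0 ->
  Bm w e i *m Bm w f j =
  (if addb e f then Sm *m Dm (w ^ ((if f then - (i%:Z) else i%:Z) + j%:Z))
   else Dm (w ^ ((if f then - (i%:Z) else i%:Z) + j%:Z))).
Proof.
move=> w0; rewrite expfzDr //.
have wi : w ^ (- (i%:Z)) = (w ^+ i)^-1 by rewrite -invr_expz.
have wp : forall n : nat, w ^ (n%:Z) = w ^+ n by [].
case: e; case: f; rewrite /Bm /= ?wi !wp.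
- by rewrite mulmxA -(mulmxA Sm (Dm _) Sm) DmS mulmxA SmSm mul1mx DmM.
- by rewrite -mulmxA DmM.
- by rewrite mulmxA DmS -mulmxA DmM.
- by rewrite DmM.
Qed.

Lemma wpow (w : algC) (m : nat) (k : int) : (0 < m)%N -> w ^+ (2 * m) = 1 ->
  w ^ k = w ^+ absz (k %% (2 * m)%:Z)%Z.
Proof.
move=> m0 h.
have w0 : w != 0.
  have e : (2 * m == 0)%N = false by apply/eqP; lia.
  by apply/eqP=> w0; move: h; rewrite w0 expr0n e => /eqP; rewrite eq_sym oner_eq0.
have d0 : ((2 * m)%:Z != 0) by rewrite eqz_nat; apply/eqP; lia.
rewrite {1}(divz_eq k (2 * m)%:Z) expfzDr // -exprz_exp exprzAC.
have -> : w ^ ((2 * m)%:Z) = 1 by exact: h.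
rewrite exp1rz mul1r.
have := modz_ge0 k d0.
by case: (k %% _)%Z.
Qed.

Lemma Bm_shift (m : nat) (w : algC) (b : bool) (q : nat) : w ^+ m = -1 -> (m <= q)%N ->
  Bm w b q = - Bm w b (q - m).
Proof.
move=> hw hq; rewrite /Bm.
have -> : w ^+ q = - w ^+ (q - m) by rewrite -{1}(subnK hq) exprD hw mulrN1.
by rewrite DmN; case: b => //; rewrite mulmxN.
Qed.

Lemma sum_sel (m : nat) (w : algC) (b : bool) (q : nat) : (0 < m)%N -> w ^+ m = -1 -> (q < 2 * m)%N ->
  \sum_(l : 'I_m) ratr (if q == l then 1 else if q == (l + m)%N then -1 else 0) *: Bm w b l
  = Bm w b q.
Proof.
move=> m0 hw q2; case: (ltnP q m) => hq.
  rewrite (bigD1 (Ordinal hq)) //= eqxx rmorph1 scale1r big1 ?addr0 // => l hl.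
  have -> : (q == l) = false.
    by apply/eqP=> ql; move: hl; rewrite -(inj_eq val_inj) /= ql eqxx.
  have -> : (q == l + m)%N = false by apply/eqP; lia.
  by rewrite rmorph0 scale0r.
have hq' : (q - m < m)%N by lia.
rewrite (bigD1 (Ordinal hq')) //=.
have -> : (q == q - m)%N = false by apply/eqP; lia.
have -> : (q == q - m + m)%N by apply/eqP; lia.
rewrite (@Bm_shift m w b q hw hq) rmorphN1 scaleN1r big1 ?addr0 // => l hl.
have -> : (q == l) = false by apply/eqP; have := ltn_ord l; lia.
have -> : (q == l + m)%N = false.
  by apply/eqP=> ql; move: hl; rewrite -(inj_eq val_inj) /= ql addnK eqxx.
by rewrite rmorph0 scale0r.
Qed.

Lemma sum_dcoef (m : nat) (w : algC) (e : bool) (i : nat) (f : bool) (j : nat) :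
  (0 < m)%N -> w ^+ m = -1 ->
  \sum_(gl : bool * 'I_m) ratr (dcoef m e i f j gl.1 gl.2) *: Bm w gl.1 gl.2
  = Bm w e i *m Bm w f j.
Proof.
move=> m0 hw.
have w2 : w ^+ (2 * m) = 1 by rewrite mulnC exprM hw expr2 mulN1r opprK.
have w0 : w != 0.
  apply/eqP => w0; move: hw; rewrite w0 expr0n.
  have -> : (m == 0)%N = false by apply/eqP; lia.
  by move/eqP; rewrite /= eq_sym oppr_eq0 oner_eq0.
rewrite BmM // (@wpow w m _ m0 w2).
set q := absz _.
have q2 : (q < 2 * m)%N.
  rewrite /q; have d0 : (0 < (2 * m)%:Z)%R by rewrite ltz_nat; lia.
  have := ltz_pmod ((if f then - (i%:Z) else i%:Z) + j%:Z) d0.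
  have := modz_ge0 ((if f then - (i%:Z) else i%:Z) + j%:Z) (lt0r_neq0 d0).
  by case: (_ %% _)%Z.
have -> : (if addb e f then Sm *m Dm (w ^+ q) else Dm (w ^+ q)) = Bm w (addb e f) q by [].
rewrite -(pair_bigA _ (fun g (l : 'I_m) => ratr (dcoef m e i f j g l) *: Bm w g l)) /= big_bool /=.
rewrite /dcoef /= -/q.
case: (addb e f) => /=.
  have := @sum_sel m w true q m0 hw q2; rewrite /Bm /= => ->.
  rewrite [X in _ + X]big1 ?addr0 // => l _.
  by rewrite rmorph0 scale0r.
have := @sum_sel m w false q m0 hw q2; rewrite /Bm /= => ->.
rewrite big1 ?add0r // => l _.
by rewrite rmorph0 scale0r.
Qed.

Definition rQ (q : rat) : algC := ratr q.

Definition ev (m : nat) (w : algC) (x : RQ m) : 'M[algC]_2 :=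
  \sum_(gl : bool * 'I_m) rQ (x gl) *: Bm w gl.1 gl.2.
Arguments ev {m}.

Lemma ev_mul (m : nat) (w : algC) (x y : RQ m) : (0 < m)%N -> w ^+ m = -1 ->
  ev w (mulRQ x y) = ev w x *m ev w y.
Proof.
move=> m0 hw; rewrite /ev.
transitivity (\sum_(ei : bool * 'I_m) \sum_(fj : bool * 'I_m)
   (rQ (x ei) * rQ (y fj)) *: (Bm w ei.1 ei.2 *m Bm w fj.1 fj.2)).
  have E : forall gl, rQ (mulRQ x y gl) = \sum_(ei : bool * 'I_m) \sum_(fj : bool * 'I_m)
      rQ (x ei) * rQ (y fj) * rQ (dcoef m ei.1 ei.2 fj.1 fj.2 gl.1 gl.2).
    move=> gl; rewrite /mulRQ ffunE /rQ rmorph_sum; apply: eq_bigr => ei _.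
    by rewrite rmorph_sum; apply: eq_bigr => fj _; rewrite !rmorphM.
  under eq_bigr => gl _ do rewrite E scaler_suml.
  rewrite exchange_big /=; apply: eq_bigr => ei _.
  under eq_bigr => gl _ do rewrite scaler_suml.
  rewrite exchange_big /=; apply: eq_bigr => fj _.
  rewrite -(@sum_dcoef m w _ _ _ _ m0 hw) scaler_sumr; apply: eq_bigr => gl _.
  by rewrite scalerA.
rewrite mulmx_suml; apply: eq_bigr => ei _.
rewrite mulmx_sumr; apply: eq_bigr => fj _.
by rewrite -scalemxAl -scalemxAr scalerA.
Qed.

Lemma ev_one (m : nat) (w : algC) : (0 < m)%N -> ev w (oneRQ m) = 1%:M.
Proof.
move=> m0; rewrite /ev (bigD1 (false, Ordinal m0)) //= ffunE /=.
rewrite /rQ rmorph1 scale1r expr0 Dm1 big1 ?addr0 // => [[g l]] /= hl.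
rewrite ffunE /=.
case: g hl => //= hl; first by rewrite rmorph0 scale0r.
case: eqP => [l0|_]; last by rewrite rmorph0 scale0r.
by exfalso; move/eqP: hl; apply; congr pair; exact: val_inj.
Qed.
Lemma sum_pair (V : nmodType) (m : nat) (F : bool * 'I_m -> V) :
  \sum_k F k = \sum_(l < m) F (true, l) + \sum_(l < m) F (false, l).
Proof.
rewrite (eq_bigr (fun p => F (p.1, p.2))); last by case.
by rewrite -(pair_bigA _ (fun g l => F (g, l))) big_bool.
Qed.

Lemma SDm u : Sm *m Dm u = \matrix_(i, j) if i == j then 0 else (if i == 0 then u^-1 else u).
Proof. by m2. Qed.

Definition P (m : nat) (c : 'I_m -> rat) (u : algC) := \sum_(l < m) rQ (c l) * u ^+ l.
Arguments P {m}.

Lemma ev_entries (m : nat) (w : algC) (x : RQ m) :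
  ev w x = \matrix_(i, j) (if i == j
     then P (fun l => x (false, l)) (if i == 0 then w else w^-1)
     else P (fun l => x (true, l)) (if i == 0 then w^-1 else w)).
Proof.
apply/matrixP => i j; rewrite mxE /ev summxE sum_pair /P /Bm.
under eq_bigr => l _ do rewrite SDm !mxE.
under [X in _ + X]eq_bigr => l _ do rewrite !mxE.
have z : forall (c : 'I_m -> algC), \sum_(l < m) c l * 0 = 0.
  by move=> c; rewrite big1 // => l _; rewrite mulr0.
by case: (ord2P i) => ->; case: (ord2P j) => -> /=;
  rewrite ?z ?add0r ?addr0 //; apply: eq_bigr => l _; rewrite exprVn.
Qed.
Lemma det2 (R : comNzRingType) (A : 'M[R]_2) :
  \det A = A 0 0 * A 1 1 - A 0 1 * A 1 0.
Proof.
rewrite (expand_det_row A 0) !big_ord_recl big_ord0 addr0 /cofactor !det_mx11.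
rewrite !mxE /= expr0 expr1 mul1r mulN1r mulrN.
have -> : lift 0 0 = 1 :> 'I_2 by apply/val_inj.
have -> : lift 1 0 = 0 :> 'I_2 by apply/val_inj.
by [].
Qed.

Lemma det_ev (m : nat) (w : algC) (x : RQ m) :
  \det (ev w x) = P (fun l => x (false, l)) w * P (fun l => x (false, l)) w^-1
                - P (fun l => x (true, l)) w^-1 * P (fun l => x (true, l)) w.
Proof. by rewrite ev_entries det2 !mxE /=. Qed.

Lemma poly_zero (m : nat) (z : algC) (c d : 'I_m -> rat) :
  (2 * m).-primitive_root z ->
  (forall k, odd k -> (k < 2 * m)%N -> P c (z ^+ k) = P d (z ^+ k)) -> c =1 d.
Proof.
case: m c d => [|m] c d prim h; first by case.
pose E i := rQ (c (inord i)) - rQ (d (inord i)).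
pose p := \poly_(i < m.+1) E i.
pose rs := [seq z ^+ (2 * j + 1) | j <- iota 0 m.+1].
have rootp : all (root p) rs.
  apply/allP => u /mapP [j]; rewrite mem_iota add0n => /andP [_ hj] ->.
  rewrite /root horner_poly; apply/eqP.
  have o : odd (2 * j + 1) by rewrite oddD oddM.
  have l : (2 * j + 1 < 2 * m.+1)%N by lia.
  have := h _ o l; rewrite /P => e.
  under eq_bigr => i _ do rewrite /E inord_val mulrBl.
  by rewrite sumrB e subrr.
have urs : uniq rs.
  rewrite map_inj_in_uniq ?iota_uniq // => i j; rewrite !mem_iota !add0n => /andP [_ hi] /andP [_ hj].
  move/eqP; rewrite (eq_prim_root_expr prim) !modn_small; try lia.
have p0 : p = 0.
  apply/eqP; apply: contraT => pn0.
  have := max_poly_roots pn0 rootp urs.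
  rewrite size_map size_iota => H.
  by have := size_poly m.+1 E; rewrite -/p => /(leq_trans H); rewrite ltnn.
move=> l; have := congr1 (fun q : {poly algC} => q`_l) p0; rewrite coef_poly ltn_ord coef0 /E inord_val.
by move/eqP; rewrite subr_eq0 => /eqP /fmorph_inj.
Qed.

Lemma inj_surj (vT : vectType rat) (f : vT -> vT) :
  (forall a u v, f (a *: u + v) = a *: f u + f v) -> injective f ->
  forall v, exists u, f u = v.
Proof.
move=> lin inj v.
have lf : linear f by move=> a u w; exact: lin.
pose g : {linear vT -> vT} := HB.pack f (GRing.isLinear.Build rat vT vT *:%R f lf).
have kg : lker (linfun g) == 0%VS.
  by apply/lker0P => u w; rewrite !lfunE /=; apply: inj.
exists ((linfun g)^-1%VF v).
have := lker0_lfunVK kg v; rewrite lfunE /= => ->.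
done.
Qed.
Lemma ffD (m : nat) (f g : {ffun bool * 'I_m -> rat^o}) i : (f + g) i = f i + g i.
Proof. by rewrite ffunE. Qed.
Lemma ffZ (m : nat) (a : rat) (f : {ffun bool * 'I_m -> rat^o}) i : (a *: f) i = a * f i.
Proof. by rewrite ffunE. Qed.

Lemma mulRQ_lin (m : nat) (x : RQ m) (a : rat) (u v : {ffun bool * 'I_m -> rat^o}) :
  (mulRQ x (a *: u + v) : {ffun bool * 'I_m -> rat^o}) = a *: (mulRQ x u : {ffun bool * 'I_m -> rat^o}) + mulRQ x v.
Proof.
apply/ffunP => gl; rewrite ffD ffZ /mulRQ !ffunE.
rewrite mulr_sumr -big_split; apply: eq_bigr => ei _.
rewrite mulr_sumr -big_split; apply: eq_bigr => fj _.
rewrite ffD ffZ /=. ring.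
Qed.
Lemma N1_neq1 : (-1 : algC) != 1.
Proof.
apply/eqP => h; have : (2%:R : algC) == 0.
  by rewrite -[2%N]/(1 + 1)%N natrD -{1}h addNr.
by rewrite pnatr_eq0.
Qed.

Lemma prim_zeta (p : nat) : (2 * 2 ^ p).-primitive_root (zeta (2 ^ p)).
Proof.
set m := (2 ^ p)%N; set z := zeta m.
have m0 : (0 < m)%N by rewrite expn_gt0.
have zm : z ^+ m = -1 by rewrite /z /zeta rootCK.
have z2 : z ^+ (2 * m) = 1 by rewrite mulnC exprM zm expr2 mulN1r opprK.
have [d pd dd] := prim_order_exists (n := (2 * m)%N) (z := z) ltac:(lia) z2.
have : (d %| 2 ^ p.+1)%N by rewrite expnS.
case/(dvdn_pfactor _ _ (isT : prime 2)) => e he de.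
case: (ltnP e p.+1) => [lt|ge].
  have : (d %| m)%N by rewrite de /m dvdn_exp2l.
  by rewrite (prim_order_dvd pd) zm (negbTE N1_neq1).
have -> : (2 * m = d)%N by rewrite de /m -expnS; congr (_ ^ _)%N; lia.
exact: pd.
Qed.
Lemma P_conj (m : nat) (c : 'I_m -> rat) (w : algC) : `|w| = 1 -> P c w^-1 = (P c w)^*.
Proof.
move=> nw; have cw : w^-1 = w^* by rewrite invC_norm nw expr1n invr1 mul1r.
rewrite /P rmorph_sum; apply: eq_bigr => l _.
by rewrite rmorphM rmorphXn /rQ fmorph_rat cw.
Qed.

Lemma cond_equiv (A B : algC) : (`|A| - `|B| != 0) = (A * A^* - B * B^* != 0).
Proof.
rewrite -!normCK subr_sqr mulf_eq0 negb_or.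
case: (`|A| - `|B| =P 0) => //= h; symmetry; apply/negP => /eqP.
move/eqP; rewrite paddr_eq0 // => /andP [/eqP a /eqP b].
by apply: h; rewrite a b subrr.
Qed.

Lemma det_ev_norm (m : nat) (w : algC) (x : RQ m) : `|w| = 1 ->
  \det (ev w x) = P (fun l => x (false, l)) w * (P (fun l => x (false, l)) w)^*
                - P (fun l => x (true, l)) w * (P (fun l => x (true, l)) w)^*.
Proof. by move=> nw; rewrite det_ev !P_conj // [_^* * _]mulrC. Qed.

Lemma det_ev_inv (m : nat) (w : algC) (x : RQ m) :
  \det (ev w^-1 x) = \det (ev w x).
Proof. by rewrite !det_ev invrK [P _ w * _]mulrC [P _ w^-1 * _]mulrC. Qed.

Lemma evalC_P (m : nat) (a b : 'I_m -> int) (k : nat) :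
  evalC a k = P (fun l => eltRQ a b (false, l)) (zeta m ^+ k) /\
  evalC b k = P (fun l => eltRQ a b (true, l)) (zeta m ^+ k).
Proof.
by split; apply: eq_bigr => i _; rewrite ffunE /= /rQ rmorph_int exprM.
Qed.

Lemma ev_inj (m : nat) (z : algC) (x y : RQ m) : (2 * m).-primitive_root z ->
  (forall k, odd k -> (k < 2 * m)%N -> ev (z ^+ k) x = ev (z ^+ k) y) -> x = y.
Proof.
move=> prim h; apply/ffunP => [[g l]]; case: g.
  apply: (@poly_zero m z (fun l => x (true, l)) (fun l => y (true, l)) prim _ l) => k ko k2.
  by have := congr1 (fun M : 'M[algC]_2 => M 1 0) (h k ko k2); rewrite !ev_entries !mxE /=.
apply: (@poly_zero m z (fun l => x (false, l)) (fun l => y (false, l)) prim _ l) => k ko k2.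
by have := congr1 (fun M : 'M[algC]_2 => M 0 0) (h k ko k2); rewrite !ev_entries !mxE /=.
Qed.
Theorem lemma4 (p : nat) (a b : 'I_(2 ^ p) -> int) :
  invertibleRQ (eltRQ a b) <->
  (forall k : nat, odd k -> (1 <= k <= 2 ^ p)%N ->
     `|evalC a k| - `|evalC b k| != 0).
Proof.
have prim := prim_zeta p.
move: a b prim; set m := (2 ^ p)%N => a b prim.
have m0 : (0 < m)%N by rewrite expn_gt0.
clearbody m.
set z := zeta m in prim *.
set x := eltRQ a b.
have zm : z ^+ m = -1 by rewrite /z /zeta rootCK.
have wm : forall k, odd k -> (z ^+ k) ^+ m = -1.
  by move=> k ko; rewrite -exprM mulnC exprM zm -signr_odd ko expr1.
have nz : forall k, `|z ^+ k| = 1.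
  have z2 : z ^+ (2 * m) = 1 by apply/eqP; rewrite -(prim_order_dvd prim).
  have : `|z| ^+ (2 * m) == 1 by rewrite -normrX z2 normr1.
  rewrite pexpr_eq1 ?normr_ge0 ?muln_gt0 // => /eqP n1 k.
  by rewrite normrX n1 expr1n.
have detk : forall k, \det (ev (z ^+ k) x) = 
    evalC a k * (evalC a k)^* - evalC b k * (evalC b k)^*.
  by move=> k; rewrite det_ev_norm //; have [-> ->] := @evalC_P m a b k.
split.
  case=> y [xy yx] k ko /andP [k1 km].
  have := congr1 (ev (z ^+ k)) xy; rewrite ev_mul ?wm // ev_one // => E.
  rewrite cond_equiv -detk; apply/eqP => d0.
  have h1 : \det (ev (z ^+ k) x *m ev (z ^+ k) y) = 1 by rewrite E det1.
  move: h1; rewrite det_mulmx d0 mul0r => /eqP.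
  by rewrite eq_sym oner_eq0.
move=> H.
have unit_k : forall k, odd k -> (k < 2 * m)%N -> ev (z ^+ k) x \in unitmx.
  move=> k ko k2; rewrite unitmxE unitfE.
  case: (leqP k m) => km.
    rewrite detk -cond_equiv; apply: H => //; apply/andP; split => //.
    by case: k ko {k2 km}.
  have ko' : odd (2 * m - k) by rewrite oddB ?ko ?oddM //; lia.
  have zk : z ^+ k = (z ^+ (2 * m - k))^-1.
    have u : z ^+ (2 * m - k) != 0 by rewrite -normr_eq0 nz oner_eq0.
    have z2 : z ^+ (2 * m) = 1 by apply/eqP; rewrite -(prim_order_dvd prim).
    by rewrite -[LHS]mulr1 -(mulfV u) mulrA -exprD subnKC ?(ltnW k2) // z2 mul1r.
  rewrite zk det_ev_inv detk -cond_equiv; apply: H => //; apply/andP; split; lia.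
have inj : injective (fun u : {ffun bool * 'I_m -> rat^o} => (mulRQ x u : {ffun bool * 'I_m -> rat^o})).
  move=> u v /= e; apply: (@ev_inj m z _ _ prim) => k ko k2.
  have := congr1 (ev (z ^+ k)) e; rewrite !ev_mul ?wm // => e'.
  by rewrite -(mulKmx (unit_k k ko k2) (ev _ u)) e' mulKmx ?unit_k.
have [y xy] := @inj_surj _ _ (@mulRQ_lin m x) inj (oneRQ m : {ffun bool * 'I_m -> rat^o}).
exists y; split => //.
apply: (@ev_inj m z _ _ prim) => k ko k2.
rewrite ev_mul ?wm // ev_one //; apply: mulmx1C.
by rewrite -ev_mul ?wm // xy ev_one.
Qed.
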